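(* \[ \sum_{n=0}^\infty\frac{p(n)\,(-2^{24})^n}{(2n+1)^5(6n+1)^5(6n+5)^5\binom{6n}{3n}^5}=\frac{189}{2}\zeta(3), \] where \[ p(n)=491287680n^{12}+3517115904n^{11}+11399133888n^{10}+22100247360n^9+28522562400n^8+25791650640n^7 \] \[ +16738310448n^6+7846312104n^5+2633313600n^4+616193160n^3+95283770n^2+8729374n+357931. \]
   Context: $\zeta$ is the Riemann zeta function. *)

(* Defs.v *)
From Stdlib Require Import Reals.
From Coquelicot Require Import Coquelicot.
Open Scope R_scope.

Definition zeta3 : R := Series (fun k : nat => / (INR k + 1) ^ 3).

Definition p18 (n : R) : R :=
  491287680 * n ^ 12 + 3517115904 * n ^ 11 + 11399133888 * n ^ 10
  + 22100247360 * n ^ 9 + 28522562400 * n ^ 8 + 25791650640 * n ^ 7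
  + 16738310448 * n ^ 6 + 7846312104 * n ^ 5 + 2633313600 * n ^ 4
  + 616193160 * n ^ 3 + 95283770 * n ^ 2 + 8729374 * n + 357931.

Definition term18 (n : nat) : R :=
  p18 (INR n) * (- 2 ^ 24) ^ n /
  ((2 * INR n + 1) ^ 5 * (6 * INR n + 1) ^ 5 * (6 * INR n + 5) ^ 5
   * (Binomial.C (6 * n)%nat (3 * n)%nat) ^ 5).

(* Main.v *)
Require Import Defs.
From Stdlib Require Import Reals Lra Lia List.
From Coquelicot Require Import Coquelicot.
Import ListNotations.
Open Scope R_scope.

Fixpoint pr (m k : nat) : R :=
  match m with
  | O => 2 * INR k + 1
  | S m' => pr m' k * (2 * INR k + 2 * INR m' + 3)
  end.

Lemma pr_pos m k : 0 < pr m k.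
Proof.
  induction m; simpl; pose proof (pos_INR k); try pose proof (pos_INR m).
  - lra.
  - apply Rmult_lt_0_compat; lra.
Qed.

Lemma pr_ge_pow m k : (2 * INR k + 1) ^ (S m) <= pr m k.
Proof.
  induction m; simpl; pose proof (pos_INR k); try pose proof (pos_INR m).
  - lra.
  - simpl in IHm. rewrite Rmult_comm.
    assert (0 <= (2 * INR k + 1) ^ m) by (apply pow_le; lra).
    apply Rmult_le_compat; nra.
Qed.

Lemma pr_ge0 m k : pr m 0 * (2 * INR k + 1) <= pr m k.
Proof.
  induction m; simpl; pose proof (pos_INR k); try pose proof (pos_INR m).
  - lra.
  - replace (pr m 0 * (2 * 0 + 2 * INR m + 3) * (2 * INR k + 1))
      with ((pr m 0 * (2 * INR k + 1)) * (2 * 0 + 2 * INR m + 3)) by ring.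
    apply Rmult_le_compat; try lra.
    pose proof (pr_pos m 0). nra.
Qed.

Lemma pr_shift m k : pr m (S k) * (2 * INR k + 1) = pr m k * (2 * INR k + 2 * INR m + 3).
Proof.
  induction m; cbn [pr].
  - rewrite S_INR. simpl INR. ring.
  - replace (pr m (S k) * (2 * INR (S k) + 2 * INR m + 3) * (2 * INR k + 1))
      with ((pr m (S k) * (2 * INR k + 1)) * (2 * INR (S k) + 2 * INR m + 3)) by ring.
    rewrite IHm, !S_INR. ring.
Qed.

Lemma pr3 n k : pr (3 * n + 3) k =
  pr (3 * n) k * (2 * INR k + 6 * INR n + 3) * (2 * INR k + 6 * INR n + 5) * (2 * INR k + 6 * INR n + 7).
Proof.
  replace (3 * n + 3)%nat with (S (S (S (3 * n)))) by lia.
  cbn [pr]. rewrite !S_INR, mult_INR. simpl INR. ring.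
Qed.

Lemma pr3S n k : pr (3 * S n) k = pr (3 * n + 3) k.
Proof. f_equal. lia. Qed.

Definition hor (l : list R) (x : R) : R := fold_right (fun a acc => a + x * acc) 0 l.

Lemma hor_abs_nonneg l : 0 <= hor (map Rabs l) 1.
Proof.
  induction l; simpl; [lra|]. pose proof (Rabs_pos a). lra.
Qed.

Lemma hor_bound l x : 0 <= x -> Rabs (hor l x) <= hor (map Rabs l) 1 * (x + 1) ^ (length l).
Proof.
  intros Hx. induction l as [|a l IH]; simpl.
  - rewrite Rabs_R0. lra.
  - pose proof (hor_abs_nonneg l) as HM.
    set (M := hor (map Rabs l) 1) in *.
    set (h := hor l x) in *.
    assert (Hp : 1 <= (x + 1) ^ length l).
    { apply pow_R1_Rle. lra. }
    eapply Rle_trans. apply Rabs_triang.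
    rewrite Rabs_mult, (Rabs_right x) by lra.
    pose proof (Rabs_pos a).
    assert (x * Rabs h <= x * (M * (x + 1) ^ length l)) by (apply Rmult_le_compat_l; lra).
    assert (H1 : 1 <= (x+1) * (x + 1) ^ length l) by nra.
    assert (Rabs a <= Rabs a * ((x+1) * (x + 1) ^ length l)).
    { rewrite <- (Rmult_1_r (Rabs a)) at 1. apply Rmult_le_compat_l; lra. }
    assert (0 <= M * (x + 1) ^ length l) by nra.
    nra.
Qed.

Definition Qcoefs (y : R) : list R :=
  [(- 7734530979 + y * (- 215151434694 + y * (- 2739823922178 + y * (- 21225710096136 + y * (- 112111475408352 + y * (- 428632297488072 + y * (- 1228506657891984 + y * (- 2695371831823248 + y * (- 4579425793827936 + y * (- 6050172420343872 + y * (- 6199758995269824 + y * (- 4879095481209600 + y * (- 2892676048341120 + y * (- 1249679855185920 + y * (- 371201249802240 + y * (- 67765410902016 + y * (- 5730379499520)))))))))))))))));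
   (- 58493430912 + y * (- 1501914911868 + y * (- 17578459776528 + y * (- 124573245103440 + y * (- 598605683676192 + y * (- 2068616461982976 + y * (- 5316983956302624 + y * (- 10361314852152768 + y * (- 15448644719829504 + y * (- 17638146162980352 + y * (- 15306222146363136 + y * (- 9921111011917056 + y * (- 4652354713199616 + y * (- 1490897812967424 + y * (- 292102421667840 + y * (- 26389132259328))))))))))))))));
   (- 198208332980 + y * (- 4683084466032 + y * (- 50204286621216 + y * (- 324144485195904 + y * (- 1410050249049888 + y * (- 4377042912383712 + y * (- 10009554828719040 + y * (- 17147493248497920 + y * (- 22132776952244736 + y * (- 21436319006307072 + y * (- 15346778080396032 + y * (- 7880582597603328 + y * (- 2745429171784704 + y * (- 581148640935936 + y * (- 56422198149120)))))))))))))));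
   (- 402021652480 + y * (- 8695194539808 + y * (- 84902046158016 + y * (- 496239086600064 + y * (- 1939519252129536 + y * (- 5358946477142016 + y * (- 10779943201390080 + y * (- 15998957701567488 + y * (- 17533104204460032 + y * (- 14023112290947072 + y * (- 7961752513198080 + y * (- 3040587977250816 + y * (- 700473318248448 + y * (- 73557828698112))))))))))))));
   (- 549594125360 + y * (- 10812360673440 + y * (- 95477177151072 + y * (- 501041113803648 + y * (- 1742292203338368 + y * (- 4233613835024640 + y * (- 7377728802264576 + y * (- 9297935997525504 + y * (- 8416730933074944 + y * (- 5340692026506240 + y * (- 2256241240212480 + y * (- 570124689592320 + y * (- 65200072919040)))))))))))));
   (- 538083928064 + y * (- 9559700482368 + y * (- 75707217151488 + y * (- 353170643380992 + y * (- 1079355480800256 + y * (- 2271122436169728 + y * (- 3359887482461184 + y * (- 3497245003118592 + y * (- 2511627948122112 + y * (- 1186005988859904 + y * (- 331595299860480 + y * (- 41607743164416))))))))))));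
   (- 389866299712 + y * (- 6204366355968 + y * (- 43637089142016 + y * (- 178781604876288 + y * (- 472883754820608 + y * (- 844373922130944 + y * (- 1031442118354944 + y * (- 851642520588288 + y * (- 455143741120512 + y * (- 142246034067456 + y * (- 19751881052160)))))))))));
   (- 212522762240 + y * (- 3001206279168 + y * (- 18527292020736 + y * (- 65665894551552 + y * (- 147346606669824 + y * (- 217198007746560 + y * (- 210438793027584 + y * (- 129296105127936 + y * (- 45735863058432 + y * (- 7099857764352))))))))));
   (- 87602397440 + y * (- 1085506288128 + y * (- 5796173237760 + y * (- 17426489554944 + y * (- 32280771981312 + y * (- 37743223449600 + y * (- 27214237274112 + y * (- 11068759019520 + y * (- 1945183444992)))))))));
   (- 27172372480 + y * (- 291344802816 + y * (- 1320204423168 + y * (- 3278079700992 + y * (- 4818306539520 + y * (- 4193993687040 + y * (- 2002526281728 + y * (- 404791934976))))))));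
   (- 6242892800 + y * (- 56886620160 + y * (- 213150597120 + y * (- 420379656192 + y * (- 460370386944 + y * (- 265539575808 + y * (- 63052038144)))))));
   (- 1030225920 + y * (- 7787126784 + y * (- 23231840256 + y * (- 34197700608 + y * (- 24848695296 + y * (- 7134511104))))));
   (- 115445760 + y * (- 699359232 + y * (- 1563992064 + y * (- 1531478016 + y * (- 554729472)))));
   (- 7864320 + y * (- 36225024 + y * (- 54263808 + y * (- 26542080))));
   (- 245760 + y * (- 786432 + y * (- 589824)))].

Definition Qnum (y x : R) : R := hor (Qcoefs y) x.

Lemma wz_poly (n k : R) :
  let a := 2*k+6*n+3 in let b := 2*k+6*n+5 in let c := 2*k+6*n+7 in let e := 2*k+6*n+9 in
  let d := (2*n+1)*(6*n+1)*(6*n+5) in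
  16*((2*k+3*n+1)*12*d*(a*b*c*e)^4 - Qnum n (k+1)*(2*k+1)^4 + Qnum n k * e^4)
  + ((6*n+2)*(6*n+4)*(6*n+6))^5*(2*k+3*n+4)*e^4 = 0.
Proof. intros. unfold Qnum, Qcoefs, hor, a, b, c, e, d. simpl fold_right. ring. Qed.

Lemma Qnum0 (y : R) : Qnum y 0 = - 9 * (6*y+7)^4 * p18 y.
Proof. unfold Qnum, Qcoefs, hor, p18. simpl fold_right. ring. Qed.

Definition dd (y : R) : R := (2*y+1)*(6*y+1)*(6*y+5).
Definition rho (n : nat) : R :=
  - ((6*INR n+2)*(6*INR n+4)*(6*INR n+6))^5 / (192 * dd (INR n)).
Fixpoint c (n : nat) : R := match n with O => 1 | S m => c m * rho m end.
Definition Wt (n k : nat) : R := (2 * INR k + 3 * INR n + 1) / (pr (3 * n) k)^4.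
Definition Gt (n k : nat) : R := Qnum (INR n) (INR k) / (12 * dd (INR n) * (pr (3 * n + 3) k)^4).

Lemma dd_pos y : 0 <= y -> 0 < dd y.
Proof. intros. unfold dd. repeat apply Rmult_lt_0_compat; lra. Qed.

Lemma wz n k : Wt n k - rho n * Wt (S n) k = Gt n (S k) - Gt n k.
Proof.
  unfold Wt, Gt, rho. rewrite pr3S.
  assert (Hs : pr (3 * n + 3) (S k) = pr (3 * n + 3) k * (2 * INR k + 6 * INR n + 9) / (2 * INR k + 1)).
  { pose proof (pr_shift (3*n+3) k) as H. rewrite plus_INR, mult_INR in H. simpl INR in H.
    pose proof (pos_INR k).
    apply (Rmult_eq_reg_r (2 * INR k + 1)); [|lra]. rewrite H. field. lra. }
  rewrite Hs, pr3. rewrite !S_INR.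
  pose proof (pos_INR k) as Hk. pose proof (pos_INR n) as Hn.
  pose proof (pr_pos (3*n) k) as HX. pose proof (dd_pos (INR n) Hn) as Hd.
  pose proof (wz_poly (INR n) (INR k)) as W. simpl in W.
  set (X := pr (3*n) k) in *. set (y := INR n) in *. set (x := INR k) in *.
  assert (HQ : Qnum y (x + 1) = (16*((2*x+3*y+1)*12*((2*y+1)*(6*y+1)*(6*y+5))*((2*x+6*y+3)*(2*x+6*y+5)*(2*x+6*y+7)*(2*x+6*y+9))^4 + Qnum y x * (2*x+6*y+9)^4)
     + ((6*y+2)*(6*y+4)*(6*y+6))^5*(2*x+3*y+4)*(2*x+6*y+9)^4) / (16 * (2*x+1)^4)).
  { apply (Rmult_eq_reg_r (16 * (2*x+1)^4)).
    - unfold Rdiv. rewrite Rmult_assoc, Rinv_l. lra.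
      apply Rmult_integral_contrapositive_currified. lra. apply pow_nonzero. lra.
    - apply Rmult_integral_contrapositive_currified. lra. apply pow_nonzero. lra. }
  rewrite HQ. unfold dd.
  field. repeat split; lra.
Qed.

Lemma lim_inv_S : is_lim_seq (fun K => / (INR K + 1)) 0.
Proof.
  assert (H : is_lim_seq (fun K => INR K + 1) p_infty).
  { apply (is_lim_seq_ext (fun K => INR (S K))). intros; rewrite S_INR; reflexivity.
    apply -> (is_lim_seq_incr_1 INR). apply is_lim_seq_INR. }
  apply is_lim_seq_inv in H; [|discriminate]. exact H.
Qed.

Lemma lim_const_inv_S B : is_lim_seq (fun K => B * / (INR K + 1)) 0.
Proof.
  replace (Finite 0) with (Rbar_mult B 0) by (simpl; f_equal; ring).
  apply is_lim_seq_scal_l. apply lim_inv_S.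
Qed.

Lemma Qcoefs_len y : length (Qcoefs y) = 15%nat.
Proof. reflexivity. Qed.

Lemma Gt_bound n K : Rabs (Gt n K) <=
  (hor (map Rabs (Qcoefs (INR n))) 1 / (12 * dd (INR n))) * / (INR K + 1).
Proof.
  unfold Gt, Qnum.
  set (M := hor (map Rabs (Qcoefs (INR n))) 1).
  pose proof (pos_INR K) as Hk. pose proof (pos_INR n) as Hn.
  pose proof (dd_pos _ Hn) as Hd.
  pose proof (hor_bound (Qcoefs (INR n)) (INR K) Hk) as HB. rewrite Qcoefs_len in HB. fold M in HB.
  pose proof (hor_abs_nonneg (Qcoefs (INR n))) as HM. fold M in HM.
  set (x := INR K) in *.
  set (P := pr (3 * n + 3) K).
  assert (HP : (x + 1) ^ 4 <= P).
  { eapply Rle_trans; [| apply pr_ge_pow]. fold x.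
    eapply Rle_trans; [apply pow_incr; split; [lra| instantiate (1 := 2*x+1); lra]|].
    apply Rle_pow. lra. lia. }
  assert (HP4 : (x + 1) ^ 16 <= P ^ 4).
  { replace 16%nat with (4 * 4)%nat by reflexivity. rewrite pow_mult.
    apply pow_incr. split; [apply pow_le; lra| exact HP]. }
  assert (Hx1 : 0 < (x + 1) ^ 15) by (apply pow_lt; lra).
  assert (Hx16 : 0 < (x + 1) ^ 16) by (apply pow_lt; lra).
  rewrite Rabs_div; [| apply Rgt_not_eq; apply Rmult_lt_0_compat; [lra| apply pow_lt; apply pr_pos]].
  rewrite (Rabs_right (12 * dd (INR n) * P ^ 4)); [| apply Rle_ge; apply Rmult_le_pos; [lra| apply pow_le; unfold P; left; apply pr_pos]].
  unfold Rdiv.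
  apply Rle_trans with (M * (x + 1) ^ 15 * / (12 * dd (INR n) * (x + 1) ^ 16)).
  - apply Rmult_le_compat.
    + apply Rabs_pos.
    + apply Rlt_le, Rinv_0_lt_compat. apply Rmult_lt_0_compat; [lra| apply pow_lt; unfold P; apply pr_pos].
    + exact HB.
    + apply Rinv_le_contravar. apply Rmult_lt_0_compat; lra.
      apply Rmult_le_compat_l; lra.
  - right. replace ((x + 1) ^ 16) with ((x + 1) ^ 15 * (x + 1)) by ring.
    field. repeat split; lra.
Qed.

Lemma Gt_lim n : is_lim_seq (Gt n) 0.
Proof.
  set (B := hor (map Rabs (Qcoefs (INR n))) 1 / (12 * dd (INR n))).
  apply is_lim_seq_le_le with (u := fun K => (- B) * / (INR K + 1)) (w := fun K => B * / (INR K + 1)).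
  - intros K. pose proof (Gt_bound n K). fold B in H.
    pose proof (Rabs_le_between (Gt n K) (B * / (INR K + 1))) as [H1 _].
    split; [|apply H1; exact H]. replace (- B * / (INR K + 1)) with (- (B * / (INR K + 1))) by ring.
    apply H1; exact H.
  - apply lim_const_inv_S.
  - apply lim_const_inv_S.
Qed.

Definition zz (k : nat) : R := / (INR k + 1) ^ 3.
Definition oz (k : nat) : R := / (2 * INR k + 1) ^ 3.

Lemma sum_n_R (a : nat -> R) N : @eq R (sum_n a (S N)) (sum_n a N + a (S N)).
Proof. rewrite sum_Sn. reflexivity. Qed.

Lemma series_of_lim (a : nat -> R) (l : R) : is_lim_seq (sum_n a) l -> is_series a l.
Proof. intros H. exact H. Qed.

Lemma lim_of_series (a : nat -> R) (l : R) : is_series a l -> is_lim_seq (sum_n a) l.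
Proof. intros H. exact H. Qed.

Lemma tele_series : is_series (fun k => / (INR k + 1) - / (INR k + 2)) 1.
Proof.
  assert (Hs : forall N, @eq R (sum_n (fun k => / (INR k + 1) - / (INR k + 2)) N) (1 - / (INR N + 2))).
  { induction N.
    - rewrite sum_O. simpl. field.
    - rewrite sum_n_R, IHN, S_INR. pose proof (pos_INR N). field. repeat split; lra. }
  apply series_of_lim.
  apply (is_lim_seq_ext (fun N => 1 - / (INR N + 2))). { intros; rewrite Hs; reflexivity. }
  assert (Hl : is_lim_seq (fun K => / (INR K + 2)) 0).
  { apply (is_lim_seq_ext (fun K => / (INR (S K) + 1))).
    { intros m; rewrite S_INR; apply f_equal; ring. }
    apply (is_lim_seq_incr_1 (fun K => / (INR K + 1))). apply lim_inv_S. }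
  pose proof (is_lim_seq_minus' _ _ 1 0 (is_lim_seq_const 1) Hl) as H.
  rewrite Rminus_0_r in H. exact H.
Qed.

Lemma ex_zz : ex_series zz.
Proof.
  apply (ex_series_le zz (fun k => 2 * (/ (INR k + 1) - / (INR k + 2)))).
  - intros k. unfold norm; simpl. unfold abs; simpl. unfold zz.
    pose proof (pos_INR k).
    rewrite Rabs_right; [| apply Rle_ge, Rlt_le, Rinv_0_lt_compat, pow_lt; lra].
    assert (E : 2 * (/ (INR k + 1) - / (INR k + 2)) = 2 / ((INR k + 1) * (INR k + 2))) by (field; lra).
    rewrite E. unfold Rdiv.
    apply Rle_trans with (2 * / (2 * (INR k + 1) ^ 3)).
    + right. field. lra.
    + apply Rmult_le_compat_l; [lra|]. apply Rinv_le_contravar.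
      apply Rmult_lt_0_compat; lra. nra.
  - apply (ex_series_ext (fun k => scal 2 (/ (INR k + 1) - / (INR k + 2)))).
    { intros; reflexivity. }
    apply (@ex_series_scal_l R_AbsRing R_NormedModule 2 (fun k => / (INR k + 1) - / (INR k + 2))). exists 1. apply tele_series.
Qed.

Lemma zeta_split K : @eq R (sum_n zz (2 * K + 1)) (sum_n oz K + / 8 * sum_n zz K).
Proof.
  induction K.
  - simpl. rewrite sum_n_R, !sum_O. unfold zz, oz. simpl. field.
  - replace (2 * S K + 1)%nat with (S (S (2 * K + 1))) by lia.
    rewrite !sum_n_R, IHK. unfold zz, oz.
    rewrite !S_INR, plus_INR, mult_INR. simpl INR. pose proof (pos_INR K).
    field. repeat split; lra.
Qed.

Lemma oz_series : is_series oz (7 / 8 * zeta3).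
Proof.
  pose proof (Series_correct _ ex_zz) as Hz. unfold zeta3.
  fold zz. set (Z := Series zz) in *.
  apply series_of_lim.
  apply (is_lim_seq_ext (fun K => sum_n zz (2 * K + 1) - / 8 * sum_n zz K)).
  { intros K. rewrite zeta_split. ring. }
  replace (7 / 8 * Z) with (Z - / 8 * Z) by field.
  apply is_lim_seq_minus'.
  - apply (is_lim_seq_subseq (sum_n zz) Z (fun K => 2 * K + 1)%nat).
    + apply eventually_subseq. intros; lia.
    + apply lim_of_series. exact Hz.
  - apply (is_lim_seq_scal_l (sum_n zz) (/ 8) Z). apply lim_of_series. exact Hz.
Qed.

Definition Bn (n : nat) : R := (3 * INR n + 1) / (pr (3 * n) 0) ^ 4.

Lemma pr00 m : pr m 0 = pr m 0. Proof. reflexivity. Qed.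

Lemma Wt_bound n k : 0 <= Wt n k <= Bn n * oz k.
Proof.
  unfold Wt, Bn, oz.
  pose proof (pos_INR k) as Hk. pose proof (pos_INR n) as Hn.
  pose proof (pr_pos (3*n) k) as HP. pose proof (pr_pos (3*n) 0) as HP0.
  pose proof (pr_ge0 (3*n) k) as HG.
  set (x := INR k) in *. set (y := INR n) in *.
  set (P := pr (3*n) k) in *. set (P0 := pr (3*n) 0) in *.
  split.
  - apply Rmult_le_pos; [lra|]. left. apply Rinv_0_lt_compat, pow_lt; lra.
  - assert (H4 : (P0 * (2*x+1)) ^ 4 <= P ^ 4).
    { apply pow_incr. split; [|exact HG]. apply Rmult_le_pos; lra. }
    assert (Hq : 0 < (P0 * (2*x+1)) ^ 4) by (apply pow_lt; apply Rmult_lt_0_compat; lra).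
    apply Rle_trans with ((3*y+1)*(2*x+1) / (P0 * (2*x+1)) ^ 4).
    + unfold Rdiv. apply Rmult_le_compat.
      * lra.
      * left. apply Rinv_0_lt_compat, pow_lt; lra.
      * nra.
      * apply Rinv_le_contravar; lra.
    + right. field. split; lra.
Qed.

Lemma ex_oz : ex_series oz.
Proof. exists (7/8*zeta3). apply oz_series. Qed.

Lemma ex_Boz n : ex_series (fun k => Bn n * oz k).
Proof.
  apply (ex_series_ext (fun k => scal (Bn n) (oz k))). { intros; reflexivity. }
  apply (@ex_series_scal_l R_AbsRing R_NormedModule (Bn n) oz). apply ex_oz.
Qed.

Lemma ex_Wt n : ex_series (Wt n).
Proof.
  apply (ex_series_le (Wt n) (fun k => Bn n * oz k)).
  - intros k. unfold norm; simpl. unfold abs; simpl. destruct (Wt_bound n k).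
    rewrite Rabs_right; lra.
  - apply ex_Boz.
Qed.

Lemma tele_sum n K : @eq R (sum_n (fun k => Wt n k - rho n * Wt (S n) k) K) (Gt n (S K) - Gt n 0).
Proof.
  induction K.
  - rewrite sum_O. apply wz.
  - rewrite sum_n_R, IHK, wz. ring.
Qed.

Lemma row_rel n : Series (Wt n) - rho n * Series (Wt (S n)) = - Gt n 0.
Proof.
  assert (H1 : is_series (fun k => Wt n k - rho n * Wt (S n) k) (- Gt n 0)).
  { apply series_of_lim.
    apply (is_lim_seq_ext (fun K => Gt n (S K) - Gt n 0)). { intros K. rewrite tele_sum. reflexivity. }
    assert (L : is_lim_seq (fun K => Gt n (S K)) 0).
    { apply (is_lim_seq_incr_1 (Gt n)). apply Gt_lim. }
    pose proof (is_lim_seq_minus' _ _ 0 (Gt n 0) L (is_lim_seq_const _)) as H.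
    rewrite Rminus_0_l in H. exact H. }
  assert (H2 : is_series (fun k => Wt n k - rho n * Wt (S n) k) (Series (Wt n) - rho n * Series (Wt (S n)))).
  { pose proof (Series_correct _ (ex_Wt n)) as A.
    pose proof (Series_correct _ (ex_Wt (S n))) as B.
    pose proof (@is_series_scal R_AbsRing R_NormedModule (rho n) _ _ B) as B'.
    pose proof (@is_series_minus R_AbsRing R_NormedModule _ _ _ _ A B') as C.
    exact C. }
  apply is_series_unique in H1. apply is_series_unique in H2. rewrite <- H1, <- H2. reflexivity.
Qed.

Definition ee (n : nat) : R := c n * Series (Wt n).

Lemma ee_step n : ee n - ee (S n) = - c n * Gt n 0.
Proof.
  unfold ee. replace (- c n * Gt n 0) with (c n * (- Gt n 0)) by ring. rewrite <- (row_rel n). simpl c. ring.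
Qed.

Lemma Cform n : Binomial.C (6 * n) (3 * n) = INR (Factorial.fact (3 * n + 3 * n)) / (INR (Factorial.fact (3 * n)))^2.
Proof.
  unfold Binomial.C. replace (6 * n - 3 * n)%nat with (3 * n)%nat by lia.
  replace (6 * n)%nat with (3 * n + 3 * n)%nat by lia. simpl pow. rewrite Rmult_1_r. reflexivity.
Qed.

Lemma C_pos n : 0 < Binomial.C (6 * n) (3 * n).
Proof.
  rewrite Cform. apply Rdiv_lt_0_compat. apply INR_fact_lt_0. apply pow_lt, INR_fact_lt_0.
Qed.

Lemma Cstep n : Binomial.C (6 * S n) (3 * S n) = Binomial.C (6 * n) (3 * n) *
  ((6*INR n+1)*(6*INR n+2)*(6*INR n+3)*(6*INR n+4)*(6*INR n+5)*(6*INR n+6)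
   / ((3*INR n+1)*(3*INR n+2)*(3*INR n+3))^2).
Proof.
  rewrite !Cform.
  replace (3 * S n + 3 * S n)%nat with (S (S (S (S (S (S (3 * n + 3 * n))))))) by lia.
  replace (3 * S n)%nat with (S (S (S (3 * n)))) by lia.
  rewrite !fact_simpl. rewrite !mult_INR.
  pose proof (INR_fact_lt_0 (3 * n)). pose proof (INR_fact_lt_0 (3 * n + 3 * n)).
  pose proof (pos_INR n).
  rewrite !S_INR, !plus_INR, !mult_INR. simpl INR.
  field. repeat split; try lra; apply INR_fact_neq_0.
Qed.

Lemma rho_id (y : R) : 0 <= y ->
  - ((6*y+2)*(6*y+4)*(6*y+6))^5 / (192 * dd y) * dd (y+1) ^ 4 *
  ((6*y+1)*(6*y+2)*(6*y+3)*(6*y+4)*(6*y+5)*(6*y+6) / ((3*y+1)*(3*y+2)*(3*y+3))^2) ^ 5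
  = - 2^24 * ((6*y+7)*(6*y+9)*(6*y+11))^4 * dd y ^ 4.
Proof.
  intros Hy. unfold dd. field. repeat split; lra.
Qed.

Lemma Kid n : 81 * c n * dd (INR n) ^ 4 * Binomial.C (6 * n) (3 * n) ^ 5 =
  (- 2 ^ 24) ^ n * (pr (3 * n) 0 * (6 * INR n + 3) * (6 * INR n + 5)) ^ 4.
Proof.
  induction n.
  - unfold Binomial.C. simpl. unfold dd. simpl. field.
  - pose proof (pos_INR n) as Hn.
    rewrite Cstep. rewrite pr3S, pr3. simpl c. rewrite S_INR.
    pose proof (dd_pos _ Hn) as Hd.
    pose proof (rho_id (INR n) Hn) as R.
    set (y := INR n) in *. set (C := Binomial.C (6 * n) (3 * n)) in *.
    set (P0 := pr (3 * n) 0) in *.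
    change (INR 0) with 0.
    set (r := (6*y+1)*(6*y+2)*(6*y+3)*(6*y+4)*(6*y+5)*(6*y+6) / ((3*y+1)*(3*y+2)*(3*y+3))^2) in *.
    unfold rho. fold y.
    set (rh := - ((6*y+2)*(6*y+4)*(6*y+6))^5 / (192 * dd y)) in *.
    replace (81 * (c n * rh) * dd (y + 1) ^ 4 * (C * r) ^ 5)
      with ((81 * c n * dd y ^ 4 * C ^ 5) * (rh * dd (y+1) ^ 4 * r ^ 5) / dd y ^ 4)
      by (field; lra).
    rewrite IHn, R. rewrite <- (tech_pow_Rmult (- 2 ^ 24) n). set (T := (- 2 ^ 24) ^ n).
    field. lra.
Qed.

Lemma hyp n : term18 n = - 108 * c n * Gt n 0.
Proof.
  pose proof (Kid n) as K.
  pose proof (pos_INR n) as Hn.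
  pose proof (C_pos n) as HC.
  pose proof (pr_pos (3 * n) 0) as HP.
  pose proof (dd_pos _ Hn) as Hd.
  unfold term18, Gt. change (INR 0) with 0. rewrite Qnum0, pr3.
  set (y := INR n) in *. set (C := Binomial.C (6 * n) (3 * n)) in *.
  set (P0 := pr (3 * n) 0) in *.
  assert (Hc : c n = (- 2 ^ 24) ^ n * (P0 * (6 * y + 3) * (6 * y + 5)) ^ 4 / (81 * dd y ^ 4 * C ^ 5)).
  { rewrite <- K. field. split; lra. }
  rewrite Hc. unfold dd in *. set (T := (- 2 ^ 24) ^ n). change (INR 0) with 0.
  field. repeat split; lra.
Qed.

Lemma key_ineq y : 0 <= y ->
  2 * ((6*y+2)*(6*y+4)*(6*y+6))^5 * (3*y+4) <=
  192 * dd y * ((6*y+3)*(6*y+5)*(6*y+7))^4 * (3*y+1).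
Proof.
  intros Hy.
  set (M := (6*y+2)*(6*y+4)*(6*y+6)). set (D := (6*y+3)*(6*y+5)*(6*y+7)).
  assert (HM0 : 0 <= M) by (unfold M; repeat apply Rmult_le_pos; lra).
  assert (HMD : M <= D).
  { unfold M, D. apply Rmult_le_compat; try lra; try (apply Rmult_le_pos; lra); try (apply Rmult_le_compat; lra). }
  assert (H5 : M^5 <= D^5) by (apply pow_incr; lra).
  assert (HD0 : 0 <= D) by lra.
  assert (Hb : 0 <= 84 * (6*y+1)*(3*y+1) - 3*(6*y+7)*(3*y+4)) by nra.
  assert (H2 : D * (3*y+4) <= 84 * dd y * (3*y+1)).
  { unfold D, dd.
    assert (E : 84 * ((2*y+1)*(6*y+1)*(6*y+5)) * (3*y+1) - (6*y+3)*(6*y+5)*(6*y+7) * (3*y+4)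
               = ((2*y+1)*(6*y+5)) * (84 * (6*y+1)*(3*y+1) - 3*(6*y+7)*(3*y+4))) by ring.
    assert (0 <= ((2*y+1)*(6*y+5)) * (84 * (6*y+1)*(3*y+1) - 3*(6*y+7)*(3*y+4))).
    { apply Rmult_le_pos; [apply Rmult_le_pos; lra| exact Hb]. }
    lra. }
  assert (HD4 : 0 <= D^4) by (apply pow_le; lra).
  assert (Hdd : 0 < dd y) by (apply dd_pos; lra).
  apply Rle_trans with (2 * D^5 * (3*y+4)).
  { apply Rmult_le_compat_r; lra. }
  replace (2 * D^5 * (3*y+4)) with (2 * D^4 * (D * (3*y+4))) by ring.
  apply Rle_trans with (2 * D^4 * (84 * dd y * (3*y+1))).
  { apply Rmult_le_compat_l; [lra| exact H2]. }
  assert (0 <= dd y * D^4 * (3*y+1)) by (apply Rmult_le_pos; [apply Rmult_le_pos; lra| lra]).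
  lra.
Qed.

Definition Xs (N : nat) : R := Rabs (c N) * Bn N.

Lemma Xs_step N : Xs (S N) <= / 2 * Xs N.
Proof.
  unfold Xs, Bn. simpl c. rewrite Rabs_mult, pr3S, pr3, S_INR. change (INR 0) with 0.
  pose proof (pos_INR N) as Hy. pose proof (pr_pos (3*N) 0) as HP.
  pose proof (dd_pos _ Hy) as Hd. pose proof (key_ineq _ Hy) as K.
  set (y := INR N) in *. set (P0 := pr (3*N) 0) in *.
  assert (Hr : Rabs (rho N) = ((6*y+2)*(6*y+4)*(6*y+6))^5 / (192 * dd y)).
  { unfold rho. fold y. rewrite Rabs_left1.
    - field. lra.
    - unfold Rdiv.
      assert (0 <= ((6*y+2)*(6*y+4)*(6*y+6))^5) by (apply pow_le; repeat apply Rmult_le_pos; lra).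
      assert (0 < / (192 * dd y)) by (apply Rinv_0_lt_compat; lra).
      nra. }
  rewrite Hr.
  set (M := (6*y+2)*(6*y+4)*(6*y+6)) in *. set (D := (6*y+3)*(6*y+5)*(6*y+7)) in *.
  assert (HD : 0 < D) by (unfold D; repeat apply Rmult_lt_0_compat; lra).
  pose proof (Rabs_pos (c N)) as Hc.
  assert (HP4 : 0 < P0^4) by (apply pow_lt; lra).
  assert (HD4 : 0 < D^4) by (apply pow_lt; lra).
  replace (Rabs (c N) * (M ^ 5 / (192 * dd y)) * ((3 * (y + 1) + 1) / (P0 * (2 * 0 + 6 * y + 3) * (2 * 0 + 6 * y + 5) * (2 * 0 + 6 * y + 7)) ^ 4))
    with ((Rabs (c N) / P0^4) * (2 * M^5 * (3*y+4)) / (2 * 192 * dd y * D^4))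
    by (unfold D; field; repeat split; lra).
  replace (/ 2 * (Rabs (c N) * ((3 * y + 1) / P0 ^ 4)))
    with ((Rabs (c N) / P0^4) * (192 * dd y * D^4 * (3*y+1)) / (2 * 192 * dd y * D^4))
    by (field; repeat split; lra).
  unfold Rdiv. apply Rmult_le_compat_r.
  - left. apply Rinv_0_lt_compat. apply Rmult_lt_0_compat; [lra| exact HD4].
  - apply Rmult_le_compat_l; [|exact K].
    apply Rmult_le_pos; [lra| left; apply Rinv_0_lt_compat; lra].
Qed.

Lemma Xs_geom N : Xs N <= (/ 2) ^ N.
Proof.
  induction N.
  - unfold Xs, Bn. simpl. rewrite Rabs_R1. right. field.
  - eapply Rle_trans. apply Xs_step. simpl. apply Rmult_le_compat_l; lra.
Qed.

Lemma Series_zero : Series (fun _ => 0) = 0.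
Proof.
  rewrite (Series_ext (fun _ => 0) (fun n => 0 * oz n)) by (intros; ring).
  rewrite Series_scal_l. ring.
Qed.

Lemma Series_oz : Series oz = 7 / 8 * zeta3.
Proof. apply is_series_unique. apply oz_series. Qed.

Lemma Oz_nonneg : 0 <= Series oz.
Proof.
  rewrite <- Series_zero. apply Series_le; [|apply ex_oz].
  intros k. unfold oz. split; [lra|]. left. apply Rinv_0_lt_compat, pow_lt.
  pose proof (pos_INR k). lra.
Qed.

Lemma ee_bound N : Rabs (ee N) <= Series oz * (/ 2) ^ N.
Proof.
  unfold ee.
  assert (H0 : 0 <= Series (Wt N)).
  { rewrite <- Series_zero. apply Series_le; [|apply ex_Wt]. intros k. destruct (Wt_bound N k). lra. }
  assert (H1 : Series (Wt N) <= Bn N * Series oz).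
  { rewrite <- Series_scal_l. apply Series_le; [apply Wt_bound| apply ex_Boz]. }
  rewrite Rabs_mult, (Rabs_right (Series (Wt N))) by lra.
  pose proof (Xs_geom N) as HX. unfold Xs in HX.
  pose proof (Rabs_pos (c N)). pose proof Oz_nonneg.
  apply Rle_trans with (Rabs (c N) * (Bn N * Series oz)).
  { apply Rmult_le_compat_l; lra. }
  replace (Rabs (c N) * (Bn N * Series oz)) with (Series oz * (Rabs (c N) * Bn N)) by ring.
  apply Rmult_le_compat_l; lra.
Qed.

Lemma ee_lim : is_lim_seq ee 0.
Proof.
  set (O := Series oz).
  assert (L : is_lim_seq (fun N => O * (/ 2) ^ N) 0).
  { replace (Finite 0) with (Rbar_mult O 0) by (simpl; f_equal; ring).
    apply is_lim_seq_scal_l. apply is_lim_seq_geom. rewrite Rabs_right; lra. }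
  assert (L' : is_lim_seq (fun N => - O * (/ 2) ^ N) 0).
  { replace (Finite 0) with (Rbar_mult (- O) 0) by (simpl; f_equal; ring).
    apply is_lim_seq_scal_l. apply is_lim_seq_geom. rewrite Rabs_right; lra. }
  apply (is_lim_seq_le_le (fun N => - O * (/ 2) ^ N) ee (fun N => O * (/ 2) ^ N)); auto.
  intros N. pose proof (ee_bound N). fold O in H.
  destruct (Rabs_le_between (ee N) (O * (/2)^N)) as [H1 _].
  specialize (H1 H). lra.
Qed.

Lemma ee0 : ee 0 = 7 / 8 * zeta3.
Proof.
  unfold ee. simpl c. rewrite Rmult_1_l. rewrite <- Series_oz.
  apply Series_ext. intros k. unfold Wt, oz. simpl pr. simpl INR.
  pose proof (pos_INR k). field. lra.
Qed.

Lemma sum_term N : @eq R (sum_n term18 N) (108 * (ee 0 - ee (S N))).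
Proof.
  induction N.
  - rewrite sum_O. rewrite hyp. replace (- 108 * c 0 * Gt 0 0) with (108 * (- c 0 * Gt 0 0)) by ring.
    rewrite <- ee_step. reflexivity.
  - rewrite sum_n_R, IHN, hyp.
    replace (- 108 * c (S N) * Gt (S N) 0) with (108 * (- c (S N) * Gt (S N) 0)) by ring.
    rewrite <- ee_step. ring.
Qed.

Theorem mainTheorem18 : is_series term18 (189 / 2 * zeta3).
Proof.
  apply series_of_lim.
  apply (is_lim_seq_ext (fun N => 108 * (ee 0 - ee (S N)))).
  { intros N. rewrite sum_term. reflexivity. }
  assert (L : is_lim_seq (fun N => ee (S N)) 0).
  { apply (is_lim_seq_incr_1 ee). apply ee_lim. }
  pose proof (is_lim_seq_minus' _ _ (ee 0) 0 (is_lim_seq_const _) L) as H.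
  pose proof (is_lim_seq_scal_l _ 108 _ H) as H'.
  replace (189 / 2 * zeta3) with (108 * (ee 0 - 0)) by (rewrite ee0; field).
  exact H'.
Qed.
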